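(* Let $B=(B,+,0)$ be a unitary magma, let $(X,\varphi)$ and $(X',\varphi')$ be $B$-actions, and let $f\colon X\to X'$ be a morphism of unitary magmas (with respect to the structures $x+x'=\varphi(x,0,x',0)$ on $X$ and $y+y'=\varphi'(y,0,y',0)$ on $X'$). If $f$ is an isomorphism and a $B$-morphism, then there exists a unique isomorphism of unitary magmas $g\colon X\rtimes_\varphi B\to X'\rtimes_{\varphi'}B$ such that $\pi_{X'}g=f\pi_X$, $g(x,0)=(f(x),0)$ for all $x\in X$, and $g(0,b)=(0,b)$ for all $b\in B$, where $\pi_X,\pi_{X'}$ denote the first-coordinate projections.
   Context: A unitary magma is a set with a binary operation $+$ and an element $0$ with $b+0=b=0+b$ for all $b$; morphisms preserve $+$ and $0$. A $B$-action is a pair $(X,\varphi)$ with $X$ a set and $\varphi\colon X\times B\times X\times B\to X$ a map such that: (1) there is an element $0\in X$ with $\varphi(x,0,0,0)=x=\varphi(0,0,x,0)$ for all $x\in X$; (2) $\varphi(x,b,0,0)=\varphi(x,0,0,b)=\varphi(0,0,x,b)$ for all $x\in X,b\in B$; (3) $\varphi(0,b,0,b')=0$ for all $b,b'\in B$; (4) writing $\varphi_{00}(x,b)=\varphi(x,0,0,b)$, for all $x,x'\in X$, $b,b'\in B$: $\varphi(x,b,x',b')=\varphi_{00}\big(\varphi(\varphi_{00}(x,b),b,\varphi_{00}(x',b'),b'),\,b+b'\big)$. The semidirect product $X\rtimes_\varphi B$ is the set $\{(x,b)\in X\times B\mid\varphi(x,0,0,b)=x\}$ with operation $(x,b)+(x',b')=(\varphi(x,b,x',b'),b+b')$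 and neutral element $(0,0)$. A $B$-morphism from $(X,\varphi)$ to $(X',\varphi')$ is a map $f\colon X\to X'$ with $f(0)=0$ and $\varphi'(f(x),b,f(x'),b')=f(\varphi(x,b,x',b'))$ for all $x,x'\in X$, $b,b'\in B$. *)

(* Defs.v *)
From Stdlib Require Import ssreflect ssrfun.

Set Implicit Arguments.

Definition unitary_magma (M : Type) (add : M -> M -> M) (z : M) : Prop :=
  forall b, add b z = b /\ add z b = b.

Definition umagma_morph (M N : Type) (addM : M -> M -> M) (zM : M)
  (addN : N -> N -> N) (zN : N) (h : M -> N) : Prop :=
  h zM = zN /\ forall a b, h (addM a b) = addN (h a) (h b).

Definition umagma_iso (M N : Type) (addM : M -> M -> M) (zM : M)
  (addN : N -> N -> N) (zN : N) (h : M -> N) : Prop :=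
  umagma_morph addM zM addN zN h /\ bijective h.

Definition is_action (B X : Type) (addB : B -> B -> B) (zB : B) (zX : X)
  (phi : X -> B -> X -> B -> X) : Prop :=
  (forall x, phi x zB zX zB = x /\ phi zX zB x zB = x) /\
  (forall x b, phi x b zX zB = phi x zB zX b /\ phi x zB zX b = phi zX zB x b) /\
  (forall b b', phi zX b zX b' = zX) /\
  (forall x x' b b',
      phi x b x' b' =
      phi (phi (phi x zB zX b) b (phi x' zB zX b') b') zB zX (addB b b')).

Definition act_add (B X : Type) (zB : B) (phi : X -> B -> X -> B -> X)
  (x x' : X) : X := phi x zB x' zB.

Definition B_morph (B X X' : Type) (zX : X) (zX' : X')
  (phi : X -> B -> X -> B -> X) (phi' : X' -> B -> X' -> B -> X')
  (f : X -> X') : Prop :=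
  f zX = zX' /\ forall x b x' b', phi' (f x) b (f x') b' = f (phi x b x' b').

Definition sd_mem (B X : Type) (zB : B) (zX : X)
  (phi : X -> B -> X -> B -> X) (p : X * B) : Prop :=
  phi p.1 zB zX p.2 = p.1.

Definition SD (B X : Type) (zB : B) (zX : X) (phi : X -> B -> X -> B -> X) :=
  {p : X * B | sd_mem zB zX phi p}.

Definition sd_add_raw (B X : Type) (addB : B -> B -> B)
  (phi : X -> B -> X -> B -> X) (p q : X * B) : X * B :=
  (phi p.1 p.2 q.1 q.2, addB p.2 q.2).

Lemma sd_add_mem (B X : Type) (addB : B -> B -> B) (zB : B) (zX : X)
  (phi : X -> B -> X -> B -> X) (HB : unitary_magma addB zB)
  (H : is_action addB zB zX phi) (p q : X * B) :
  sd_mem zB zX phi (sd_add_raw addB phi p q).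
Proof.
case: H => [H1 [H2 [H3 H4]]].
have idem : forall y b, phi (phi y zB zX b) zB zX b = phi y zB zX b.
  move=> y b.
  have := H4 y zX zB b.
  rewrite (proj1 (H1 y)).
  have -> : phi zX zB zX b = zX by apply: H3.
  by rewrite (proj2 (HB b)) => <-.
rewrite /sd_mem /sd_add_raw /=.
set w := phi p.1 p.2 q.1 q.2.
have Hw : w = phi (phi (phi p.1 zB zX p.2) p.2 (phi q.1 zB zX q.2) q.2) zB zX (addB p.2 q.2) by apply: H4.
by rewrite Hw idem.
Qed.

Definition sd_add (B X : Type) (addB : B -> B -> B) (zB : B) (zX : X)
  (phi : X -> B -> X -> B -> X) (HB : unitary_magma addB zB)
  (H : is_action addB zB zX phi)
  (p q : SD zB zX phi) : SD zB zX phi :=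
  exist _ (sd_add_raw addB phi (proj1_sig p) (proj1_sig q))
        (sd_add_mem HB H (proj1_sig p) (proj1_sig q)).

Lemma sd_zero_mem (B X : Type) (addB : B -> B -> B) (zB : B) (zX : X)
  (phi : X -> B -> X -> B -> X) (H : is_action addB zB zX phi) :
  sd_mem zB zX phi (zX, zB).
Proof. by case: H => [H1 _]; rewrite /sd_mem /=; apply: (proj1 (H1 zX)). Qed.

Definition sd_zero (B X : Type) (addB : B -> B -> B) (zB : B) (zX : X)
  (phi : X -> B -> X -> B -> X) (H : is_action addB zB zX phi) : SD zB zX phi :=
  exist _ (zX, zB) (sd_zero_mem H).

(* Main.v *)
Require Import Defs.
From Stdlib Require Import ssreflect ssrfun.
From Stdlib Require Import FunctionalExtensionality ProofIrrelevance.

Lemma sig_eq_helper (T : Type) (P : T -> Prop) (a b : {x : T | P x}) :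
  proj1_sig a = proj1_sig b -> a = b.
Proof.
case: a => [a ha]; case: b => [b hb] /= E; subst b.
by rewrite (proof_irrelevance _ ha hb).
Qed.

Theorem proposition4p3
  (B : Type) (addB : B -> B -> B) (zB : B) (HB : unitary_magma addB zB)
  (X : Type) (zX : X) (phi : X -> B -> X -> B -> X)
  (Hphi : is_action addB zB zX phi)
  (X' : Type) (zX' : X') (phi' : X' -> B -> X' -> B -> X')
  (Hphi' : is_action addB zB zX' phi')
  (f : X -> X')
  (Hf_morph : umagma_morph (act_add zB phi) zX (act_add zB phi') zX' f)
  (Hf_iso : umagma_iso (act_add zB phi) zX (act_add zB phi') zX' f)
  (Hf_B : B_morph zX zX' phi phi' f) :
  exists! g : SD zB zX phi -> SD zB zX' phi',
    umagma_iso (sd_add HB Hphi) (sd_zero Hphi) (sd_add HB Hphi') (sd_zero Hphi') g /\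
    (forall p, (proj1_sig (g p)).1 = f (proj1_sig p).1) /\
    (forall x (hx : sd_mem zB zX phi (x, zB)),
        proj1_sig (g (exist _ (x, zB) hx)) = (f x, zB)) /\
    (forall b (hb : sd_mem zB zX phi (zX, b)),
        proj1_sig (g (exist _ (zX, b) hb)) = (zX', b)).
Proof.
case: Hf_B => [f0 fB].
case: Hf_iso => [_ [finv fK finvK]].
have Hmem : forall p, sd_mem zB zX phi p -> sd_mem zB zX' phi' (f p.1, p.2).
  move=> [x b]; rewrite /sd_mem /= => hp.
  by rewrite -f0 fB hp.
have Hmem' : forall p, sd_mem zB zX' phi' p -> sd_mem zB zX phi (finv p.1, p.2).
  move=> [y b]; rewrite /sd_mem /= => hp.
  apply: (can_inj fK).
  by rewrite -fB finvK f0.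
pose g := fun p : SD zB zX phi =>
  exist (sd_mem zB zX' phi') (f (proj1_sig p).1, (proj1_sig p).2) (Hmem _ (proj2_sig p)).
pose h := fun p : SD zB zX' phi' =>
  exist (sd_mem zB zX phi) (finv (proj1_sig p).1, (proj1_sig p).2) (Hmem' _ (proj2_sig p)).
exists g; split; last first.

{ move=> g' [[[g'0 g'add] _] [g'1 [g'2 g'3]]].
apply: functional_extensionality => [[[x b] hp]].
have [H1 [H2 [H3 H4]]] := Hphi.
have h1 : sd_mem zB zX phi (x, zB) by rewrite /sd_mem /=; apply: (proj1 (H1 x)).
have h2 : sd_mem zB zX phi (zX, b) by rewrite /sd_mem /=; apply: H3.
have E : exist (sd_mem zB zX phi) (x, b) hp =
         sd_add HB Hphi (exist _ (x, zB) h1) (exist _ (zX, b) h2).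
  apply: sig_eq_helper; rewrite /= /sd_add_raw /=.
  by rewrite (proj2 (HB b)); rewrite /sd_mem /= in hp; rewrite hp.
apply: sig_eq_helper.
rewrite E g'add /= g'2 g'3 /sd_add_raw /= (proj2 (HB b)).
have hp2 := hp; rewrite /sd_mem /= in hp2; by rewrite -f0 fB hp2. }
  split; [split; [split|] | split].
  - by apply: sig_eq_helper; rewrite /= f0.
  - move=> a c; apply: sig_eq_helper => /=.
    by rewrite /sd_add_raw /= fB.
  - exists h.
    + by move=> [[x b] hp]; apply: sig_eq_helper => /=; rewrite fK.
    + by move=> [[x b] hp]; apply: sig_eq_helper => /=; rewrite finvK.
  - by [].
  - split; first by [].
    by move=> b hb; rewrite /= f0.
Qed.
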